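(* Let $\mathbb{F}$ be $\mathbb{R}$ or $\mathbb{C}$, and let $U\in\mathbb{F}(\epsilon)^{r\times n}$ be such that for every $S\subseteq[n]$ of size $r$, $\lim_{\epsilon\to0}\det(U_S)$ exists. Then there exists $\widehat U\in\mathbb{F}^{r\times n}$ such that for every $S\subseteq[n]$ of size $r$, $$\lim_{\epsilon\to 0}\det(U_S)=\det(\widehat U_S).$$
   Context: $\mathbb{F}(\epsilon)$ is the field of rational functions in the indeterminate $\epsilon$; for $c\in\mathbb{F}(\epsilon)$, $\lim_{\epsilon\to0}c$ is the limit of the rational function at $\epsilon=0$ (when it exists). For $S\subseteq[n]$, $U_S$ denotes the submatrix of $U$ formed by the columns indexed by $S$. *)

(* Defs.v *)
From HB Require Import structures.
From mathcomp Require Import all_boot all_order all_algebra.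
From mathcomp Require Import reals.
From mathcomp Require Import complex fraction.
Set Implicit Arguments. Unset Strict Implicit. Unset Printing Implicit Defensive.
Import Order.TTheory GRing.Theory Num.Theory.
Local Open Scope ring_scope.

(* F(eps) is modelled as {fraction {poly F}}, the field of fractions of F[eps].
   [lim0 x l] : the rational function x has limit l at eps = 0, i.e. x can be
   written p/q with q(0) <> 0 (so x is defined at 0 after cancellation), and
   l = p(0)/q(0). *)
Definition lim0 (F : fieldType) (x : {fraction {poly F}}) (l : F) : Prop :=
  exists p q : {poly F}, [/\ q.[0] != 0, x = tofrac p / tofrac q & l = p.[0] / q.[0]].

(* det(U_S): the determinant of the r x r submatrix of U formed by the columns
   indexed by S (in increasing order); only meaningful when #|S| = r
   (0 otherwise, never used in that case). *)
Definition minor (R : comRingType) (r n : nat) (U : 'M[R]_(r, n))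
    (S : {set 'I_n}) : R :=
  match #|S| =P r with
  | ReflectT h => \det (castmx (erefl r, h) (colsub (fun j : 'I_#|S| => enum_val j) U))
  | ReflectF _ => 0
  end.

Definition lemma10_prop (F : fieldType) : Prop :=
  forall (r n : nat) (U : 'M[{fraction {poly F}}]_(r, n)),
    (forall S : {set 'I_n}, #|S| = r -> exists l : F, lim0 (minor U S) l) ->
    exists Uh : 'M[F]_(r, n),
      forall S : {set 'I_n}, #|S| = r -> lim0 (minor U S) (minor Uh S).

(* Main.v *)
Require Import Defs.
From HB Require Import structures.
From mathcomp Require Import all_boot all_order all_algebra.
From mathcomp Require Import reals complex fraction perm.
Set Implicit Arguments. Unset Strict Implicit. Unset Printing Implicit Defensive.
Import Order.TTheory GRing.Theory Num.Theory.
Local Open Scope ring_scope.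


Lemma tofrac_neq0 (F : fieldType) (q : {poly F}) : q.[0] != 0 -> tofrac q != 0.
Proof. by apply: contra => /eqP; rewrite -tofrac0 => /eqP; rewrite tofrac_eq => /eqP ->; rewrite horner0. Qed.

Lemma lim0_frac (F : fieldType) (p q : {poly F}) : q.[0] != 0 ->
  lim0 (tofrac p / tofrac q) (p.[0] / q.[0]).
Proof. by move=> hq; exists p, q. Qed.

Lemma lim0_uniq (F : fieldType) x (l l' : F) : lim0 x l -> lim0 x l' -> l = l'.
Proof.
case=> p [q [hq -> ->]] [p' [q' [hq' e ->]]].
have nq := tofrac_neq0 hq; have nq' := tofrac_neq0 hq'.
have : tofrac (p * q') = tofrac (p' * q).
  have E1 : tofrac p = tofrac p / tofrac q * tofrac q by exact: (esym (divfK nq _)).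
  rewrite !tofracM E1 e mulrAC (divfK nq'). done.
move/eqP; rewrite tofrac_eq => /eqP h.
have h0 := congr1 (fun t => t.[0]) h. rewrite /= !hornerM in h0.
apply: (mulIf hq); rewrite (divfK hq); apply: (mulIf hq'); by rewrite mulrAC (divfK hq') h0.
Qed.

Lemma lim0_0 (F : fieldType) : lim0 (0 : {fraction {poly F}}) 0.
Proof. exists 0, 1; by rewrite tofrac0 mul0r horner0 mul0r hornerC oner_neq0. Qed.

Lemma lim0_1 (F : fieldType) : lim0 (1 : {fraction {poly F}}) 1.
Proof. exists 1, 1; by rewrite tofrac1 divr1 hornerC divr1 oner_neq0. Qed.

Lemma lim0M (F : fieldType) x y (l l' : F) : lim0 x l -> lim0 y l' -> lim0 (x * y) (l * l').
Proof.
case=> p [q [hq -> ->]] [p' [q' [hq' -> ->]]].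
exists (p * p'), (q * q'); rewrite !hornerM mulf_neq0 // !tofracM !mulf_div //.
Qed.

Lemma lim0D (F : fieldType) x y (l l' : F) : lim0 x l -> lim0 y l' -> lim0 (x + y) (l + l').
Proof.
case=> p [q [hq -> ->]] [p' [q' [hq' -> ->]]].
have nq := tofrac_neq0 hq; have nq' := tofrac_neq0 hq'.
exists (p * q' + p' * q), (q * q'); rewrite !hornerD !hornerM mulf_neq0 //.
by rewrite (addf_div _ _ nq nq') tofracD !tofracM (addf_div _ _ hq hq').
Qed.

Lemma lim0N (F : fieldType) x (l : F) : lim0 x l -> lim0 (- x) (- l).
Proof.
case=> p [q [hq -> ->]]; exists (- p), q; by rewrite hornerN tofracN !mulNr.
Qed.

Lemma lim0_sign (F : fieldType) (b : bool) : lim0 ((-1) ^+ b : {fraction {poly F}}) ((-1) ^+ b).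
Proof. case: b; rewrite ?expr1 ?expr0; [apply: lim0N|]; exact: lim0_1. Qed.

Lemma lim0_det (F : fieldType) m (A : 'M[{fraction {poly F}}]_m) (Ah : 'M[F]_m) :
  (forall i j, lim0 (A i j) (Ah i j)) -> lim0 (\det A) (\det Ah).
Proof.
move=> h; rewrite /determinant.
apply: (big_ind2 (fun x y => lim0 x y)); [exact: lim0_0 | move=> *; exact: lim0D |].
move=> s _; apply: lim0M; first exact: lim0_sign.
apply: (big_ind2 (fun x y => lim0 x y)); [exact: lim0_1 | move=> *; exact: lim0M |].
move=> i _; exact: h.
Qed.



Lemma polyX_decomp (F : fieldType) (p : {poly F}) : p != 0 ->
  exists k p1, p = 'X^k * p1 /\ p1.[0] != 0.
Proof.
move: {2}(size p) (leqnn (size p)) => m; elim: m p => [|m IH] p hs hp.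
  by move: hs; rewrite leqn0 size_poly_eq0 (negbTE hp).
case: (eqVneq p.[0] 0) => h0; last by exists 0%N, p; rewrite expr0 mul1r.
have : ('X - 0%:P) %| p by apply/polyXsubCP.
rewrite polyC0 subr0 => hd.
have ep : p = p %/ 'X * 'X by rewrite divpK.
have p2n : p %/ 'X != 0 by apply: contra hp => /eqP e; rewrite ep e mul0r.
have hs2 : (size (p %/ 'X)%R <= m)%N by rewrite -ltnS -(size_mulX p2n) -ep.
have [k [p1 [e1 h1]]] := IH _ hs2 p2n.
exists k.+1, p1; split=> //; by rewrite {1}ep e1 exprSr mulrAC.
Qed.

Lemma O_decomp (F : fieldType) (x : {fraction {poly F}}) l : lim0 x l -> x != 0 ->
  exists k u, [/\ x = tofrac 'X ^+ k * u, (exists lu, lim0 u lu) & (exists lv, lim0 u^-1 lv)].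
Proof.
case=> p [q [hq -> _]] hx.
have hp : p != 0 by apply: contra hx => /eqP ->; rewrite tofrac0 mul0r.
have [k [p1 [e1 h1]]] := polyX_decomp hp.
exists k, (tofrac p1 / tofrac q); split.
- by rewrite e1 tofracM tofracXn mulrA.
- by exists (p1.[0] / q.[0]); apply: lim0_frac.
- by exists (q.[0] / p1.[0]); rewrite invf_div; apply: lim0_frac.
Qed.

Lemma minorE (R : comNzRingType) r n (U : 'M[R]_(r, n)) (S : {set 'I_n}) (h : #|S| = r) :
  minor U S = \det (colsub (fun j => enum_val (cast_ord (esym h) j)) U).
Proof.
rewrite /minor; case: eqP => [h'|/(_ h) //].
rewrite (eq_irrelevance h' h); congr (\det _); apply/matrixP => i j.
by rewrite castmxE !mxE cast_ord_id.
Qed.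

Lemma minor_mul (R : comNzRingType) r n (A : 'M[R]_r) (U : 'M[R]_(r, n)) (S : {set 'I_n}) :
  #|S| = r -> minor (A *m U) S = \det A * minor U S.
Proof.
move=> h; rewrite !(minorE _ h) -det_mulmx; congr (\det _); apply/matrixP => i j.
rewrite !mxE; apply: eq_bigr => k _; by rewrite !mxE.
Qed.



Lemma lim0_Xn (F : fieldType) m : exists l, lim0 (tofrac ('X : {poly F}) ^+ m) l.
Proof.
have := @lim0_frac F ('X^m) 1; rewrite hornerC oner_neq0 => /(_ isT).
rewrite tofrac1 divr1 tofracXn => h; by exists (('X^m).[0] / 1).
Qed.

Lemma inO_c (F : fieldType) r n (U : 'M[{fraction {poly F}}]_(r, n)) :
  (forall S : {set 'I_n}, #|S| = r -> exists l : F, lim0 (minor U S) l) ->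
  forall phi : 'I_r -> 'I_n, exists l, lim0 (\det (colsub phi U)) l.
Proof.
move=> hyp phi.
case: (boolP [exists a, exists b, (a != b) && (phi a == phi b)]).
  case/existsP => a /existsP [b /andP [ne /eqP e]]; exists 0.
  rewrite -det_tr (determinant_alternate ne); first exact: lim0_0.
  by move=> x; rewrite !mxE e.
move=> hno.
have inj : injective phi.
  move=> a b e; apply/eqP; apply: contraT => ne; case/negP: hno.
  by apply/existsP; exists a; apply/existsP; exists b; rewrite ne e eqxx.
pose S := phi @: [set: 'I_r].
have h : #|S| = r by rewrite card_imset // cardsT card_ord.
have [l hl] := hyp S h; rewrite (minorE _ h) in hl.
set g := (fun j : 'I_r => enum_val (cast_ord (esym h) j)) in hl.
have Hin : forall j, phi j \in S by move=> j; apply: imset_f; rewrite inE.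
pose s0 := fun j => cast_ord h (enum_rank_in (Hin j) (phi j)).
have gs : forall j, g (s0 j) = phi j.
  by move=> j; rewrite /g /s0 cast_ordK enum_rankK_in.
have sinj : injective s0 by move=> a b e; apply: inj; rewrite -!gs e.
pose s := perm sinj.
have -> : colsub phi U = col_perm s (colsub g U).
  by apply/matrixP => i j; rewrite !mxE permE gs.
rewrite col_permE det_mulmx det_perm mulrC.
exists ((-1) ^+ perm.odd_perm s^-1 * l); apply: lim0M; [exact: lim0_sign | exact: hl].
Qed.



Lemma main_F (F : fieldType) : lemma10_prop F.
Proof.
move=> r n U hyp.
case: r U hyp => [|r] U hyp.
  exists 0 => S h; rewrite !(minorE _ h) !det_mx00; exact: lim0_1.
pose c (phi : {ffun 'I_r.+1 -> 'I_n}) := \det (colsub phi U).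
have cO : forall phi, exists l, lim0 (c phi) l by move=> phi; exact: inO_c.
case: (boolP [forall phi, c phi == 0]) => [/forallP allz | ].
  exists 0 => S h; rewrite !(minorE _ h).
  have -> : colsub (fun j => enum_val (cast_ord (esym h) j)) (0 : 'M[F]_(r.+1, n)) = 0.
    by apply/matrixP=> i j; rewrite !mxE.
  rewrite det0.
  have := allz [ffun j => enum_val (cast_ord (esym h) j)]; rewrite /c.
  have -> : colsub [ffun j => enum_val (cast_ord (esym h) j)] U
          = colsub (fun j => enum_val (cast_ord (esym h) j)) U.
    by apply/matrixP => i j; rewrite !mxE ffunE.
  move/eqP ->; exact: lim0_0.
rewrite negb_forall => /existsP [phi1 nz1].
have hk : forall phi, exists k : nat, c phi != 0 -> exists u,
    [/\ c phi = tofrac 'X ^+ k * u, (exists lu, lim0 u lu) & (exists lv, lim0 u^-1 lv)].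
  move=> phi; case: (eqVneq (c phi) 0) => [->|nz]; first by exists 0%N.
  have [l hl] := cO phi; have [k [u [e1 e2 e3]]] := O_decomp hl nz.
  by exists k => _; exists u.
have [k hk'] := fin_all_exists hk.
case: (@arg_minnP _ phi1 (fun phi => c phi != 0) k nz1) => phi0 nz0 min0.
have ratio : forall phi, exists l, lim0 (c phi / c phi0) l.
  move=> phi; case: (eqVneq (c phi) 0) => [->|nz].
    by exists 0; rewrite mul0r; exact: lim0_0.
  have [u [e1 [lu hu] _]] := hk' phi nz.
  have [u0 [e0 _ [lv hv]]] := hk' phi0 nz0.
  have [a ea] : exists a, k phi = (a + k phi0)%N by exists (k phi - k phi0)%N; rewrite subnK // min0.
  have Xn0 : tofrac ('X : {poly F}) ^+ k phi0 != 0.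
    by apply: expf_neq0; rewrite tofrac_eq0 polyX_eq0.
  have u0n : u0 != 0 by apply: contra nz0 => /eqP e; rewrite e0 e mulr0.
  have -> : c phi / c phi0 = tofrac 'X ^+ a * u * u0^-1.
    rewrite e1 e0 ea exprD invfM.
    rewrite -!mulrA; congr (_ * _); rewrite mulrC -!mulrA; congr (_ * _).
    by rewrite mulrCA (mulVf Xn0) mulr1.
  have [lx hx] := lim0_Xn F a.
  by exists (lx * lu * lv); apply: lim0M => //; apply: lim0M.
pose M := colsub phi0 U.
pose upd i j := [ffun x => if x == i then j else phi0 x].
have cramer : forall i j, c (upd i j) = (\adj M *m U) i j.
  move=> i j; rewrite /c (expand_det_col _ i) mxE.
  apply: eq_bigr => k0 _; rewrite !mxE ffunE eqxx mulrC; congr (_ * _).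
  rewrite /cofactor; congr (_ * \det _).
  apply/matrixP => a b; rewrite !mxE ffunE.
  by rewrite eq_sym (negbTE (neq_lift _ _)).
have c0n : \det M != 0 by exact: nz0.
pose B := (\det M)^-1 *: (\adj M *m U).
have UB : U = M *m B.
  by rewrite /B -scalemxAr mulmxA mul_mx_adj mul_scalar_mx scalerA mulVf // scale1r.
have Bent : forall ij : 'I_r.+1 * 'I_n, exists l, lim0 (B ij.1 ij.2) l.
  by move=> [i j]; rewrite /B mxE -cramer mulrC; exact: ratio.
have [bh hbh] := fin_all_exists Bent; clearbody B.
pose Bh := \matrix_(i, j) bh (i, j).
have [l0 hl0] := cO phi0.
exists (diag_mx (\row_i (if i == 0 then l0 else 1)) *m Bh) => S h.
rewrite UB !minor_mul // det_diag big_ord_recl big1 ?mulr1; last first.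
  by move=> i _; rewrite !mxE.
rewrite !mxE eqxx; apply: lim0M; first exact: hl0.
rewrite !(minorE _ h); apply: lim0_det => i j; rewrite !mxE.
exact: (hbh (i, _)).
Qed.

Theorem lemma10 (R : realType) : lemma10_prop R /\ lemma10_prop R[i].
Proof. split; exact: main_F. Qed.
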